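(* Under the standing assumptions below, $\sum_{i=1}^\infty\frac{a_i\pi_i}{a_i+a_j}=1$ for every $j\in\mathbb{N}$.
   Context: Standing assumptions: $X$ is one of $\ell^p$ ($1\le p\le\infty$), $c$, $c_0$; $(a_n)$ strictly decreasing positive reals, $a_n\to0$; $b=(b_n)\in X$ with $b_n>0$; $\pi_n:=2\prod_{m\ge1,\,m\ne n}\frac{1+a_m/a_n}{1-a_m/a_n}$ with $\pi\in\ell^\infty$; $\phi_{ij}:=\frac{b_i/b_j}{1+a_i/a_j}$ satisfies $\phi_{ij}\le C\mu^{|i-j|}$ for some $C>0$, $\mu\in(0,1)$. *)

(* Defs.v *)
From Stdlib Require Import Reals Lra.
From Coquelicot Require Import Coquelicot.
Open Scope R_scope.

(* Indices are shifted: the paper's index n >= 1 corresponds to n-1 here. *)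

Inductive seq_space : Type :=
  | Lp (p : R)
  | Linf
  | Cconv
  | C0.

Definition valid_space (X : seq_space) : Prop :=
  match X with Lp p => 1 <= p | _ => True end.

Definition abs_pow (x p : R) : R := if Req_EM_T x 0 then 0 else Rpower (Rabs x) p.

Definition in_space (X : seq_space) (b : nat -> R) : Prop :=
  match X with
  | Lp p => ex_series (fun n => abs_pow (b n) p)
  | Linf => exists M, forall n, Rabs (b n) <= M
  | Cconv => ex_finite_lim_seq b
  | C0 => is_lim_seq b 0
  end.

Definition natdist (i j : nat) : nat := (i - j + (j - i))%nat.

Fixpoint pprod (a : nat -> R) (n N : nat) : R :=
  match N with
  | O => 1
  | S N' => pprod a n N' *
            (if Nat.eqb N' n then 1 else (1 + a N' / a n) / (1 - a N' / a n))
  end.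

Definition is_pi (a : nat -> R) (n : nat) (v : R) : Prop :=
  is_lim_seq (fun N => 2 * pprod a n N) v.

(* Main.v *)
Require Import Defs.
From Stdlib Require Import Reals Lra Lia Psatz.
From Coquelicot Require Import Coquelicot.
Open Scope R_scope.

Fixpoint fsum (f : nat -> R) (N : nat) : R :=
  match N with O => 0 | S n => fsum f n + f n end.

Fixpoint Qp (a : nat -> R) (w : R) (N : nat) : R :=
  match N with O => 1 | S n => Qp a w n * ((w - a n) / (w + a n)) end.

Lemma fsum_ext_lt f g N : (forall i, (i < N)%nat -> f i = g i) -> fsum f N = fsum g N.
Proof. induction N; simpl; intros H; auto. rewrite IHN, H; auto; intros; apply H; lia. Qed.

Lemma fsum_lin A B u v N : fsum (fun i => A * u i + B * v i) N = A * fsum u N + B * fsum v N.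
Proof. induction N; simpl. ring. rewrite IHN; ring. Qed.

Section Alg.
Variable a : nat -> R.
Hypothesis Ha_pos : forall n, 0 < a n.
Hypothesis Ha_dec : forall n, a (S n) < a n.

Lemma a_lt m n : (m < n)%nat -> a n < a m.
Proof.
  induction n; intros H. lia.
  destruct (Nat.eq_dec m n). subst; apply Ha_dec.
  specialize (Ha_dec n). assert (a n < a m) by (apply IHn; lia). lra.
Qed.

Lemma pprod_Q n N : (N <= n)%nat -> pprod a n N = Qp a (- a n) N.
Proof.
  induction N; intros H; simpl. reflexivity.
  rewrite IHN by lia.
  assert (E : Nat.eqb N n = false) by (apply Nat.eqb_neq; lia). rewrite E.
  f_equal. pose proof (a_lt N n ltac:(lia)). pose proof (Ha_pos n).
  assert (1 - a N / a n <> 0).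
  { intro Z. assert (a N / a n = 1) by lra. 
    assert (a N = a n). { apply (Rmult_eq_reg_r (/ a n)). unfold Rdiv in H2. rewrite H2. field. lra. apply Rinv_neq_0_compat; lra. }
    lra. }
  field. repeat split; lra.
Qed.

Lemma Qp_zero j N : (j < N)%nat -> Qp a (a j) N = 0.
Proof.
  induction N; intros H; simpl. lia.
  destruct (Nat.eq_dec j N). subst. replace (a N - a N) with 0 by ring. unfold Rdiv; ring.
  rewrite IHN by lia. ring.
Qed.

Lemma ident N : forall w, (forall m, (m < N)%nat -> w + a m <> 0) ->
  fsum (fun i => a i * (2 * pprod a i N) / (a i + w)) N = 1 - Qp a w N.
Proof.
  induction N; intros w Hw; simpl. ring.
  set (A := (w - a N) / (w + a N)).
  set (B := 2 * a N / (a N + w)).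
  rewrite (fsum_ext_lt _ (fun i => A * (a i * (2 * pprod a i N) / (a i + w))
                                 + B * (a i * (2 * pprod a i N) / (a i + - a N)))).
  2:{ intros i Hi. simpl. assert (E : Nat.eqb N i = false) by (apply Nat.eqb_neq; lia).
      rewrite E. pose proof (a_lt i N Hi). pose proof (Ha_pos i). pose proof (Ha_pos N).
      assert (w + a i <> 0) by (apply Hw; lia). assert (w + a N <> 0) by (apply Hw; lia).
      assert (1 - a N / a i <> 0).
      { intro Z. assert (Hq : a N / a i = 1) by lra.
        assert (a N = a i). { apply (Rmult_eq_reg_r (/ a i)). unfold Rdiv in Hq. rewrite Hq. field. lra. apply Rinv_neq_0_compat; lra. }
        lra. }
      unfold A, B. field. repeat split; lra. }
  rewrite fsum_lin. rewrite IHN by (intros; apply Hw; lia).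
  rewrite IHN. 2:{ intros m Hm. pose proof (a_lt m N Hm). lra. }
  rewrite Nat.eqb_refl. rewrite (pprod_Q N N) by lia.
  assert (w + a N <> 0) by (apply Hw; lia).
  unfold A, B. field. lra.
Qed.

End Alg.

Lemma fac_low x : 0 < x < 1 -> 1 + 2 * x <= (1 + x) / (1 - x).
Proof.
  intros H. replace ((1 + x) / (1 - x)) with (1 + 2 * x + 2 * (x * x) / (1 - x)) by (field; lra).
  assert (0 <= 2 * (x * x) / (1 - x)) by (apply Rdiv_le_0_compat; nra). lra.
Qed.

Lemma fac_neg x : 1 < x -> (1 + x) / (1 - x) <= -1.
Proof.
  intros H. replace ((1 + x) / (1 - x)) with (-1 - 2 / (x - 1)) by (field; lra).
  assert (0 <= 2 / (x - 1)) by (apply Rdiv_le_0_compat; lra). lra.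
Qed.

Lemma div_lt1 p q : 0 < p -> p < q -> 0 < p / q < 1.
Proof.
  intros. split. apply Rdiv_lt_0_compat; lra.
  apply (Rmult_lt_reg_r q). lra. unfold Rdiv. rewrite Rmult_assoc, Rinv_l by lra. lra.
Qed.

Lemma div_gt1 p q : 0 < q -> q < p -> 1 < p / q.
Proof.
  intros. apply (Rmult_lt_reg_r q). lra. unfold Rdiv. rewrite Rmult_assoc, Rinv_l by lra. lra.
Qed.

Lemma mono_abs_lim (u : nat -> R) l : (forall n, Rabs (u n) <= Rabs (u (S n))) ->
  is_lim_seq u (Finite l) -> forall n, Rabs (u n) <= Rabs l.
Proof.
  intros Hm Hl n.
  apply is_lim_seq_abs in Hl. apply (is_lim_seq_incr_n _ n) in Hl.
  assert (Hle : forall k, Rabs (u n) <= Rabs (u (k + n)%nat)).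
  { induction k. simpl; lra. eapply Rle_trans. apply IHk. apply Hm. }
  pose proof (is_lim_seq_le (fun _ => Rabs (u n)) _ _ _ Hle (is_lim_seq_const _) Hl).
  exact H.
Qed.

Lemma fsum_tail f h K N : (K <= N)%nat -> (forall i, Rabs (f i) <= h i) ->
  Rabs (fsum f N - fsum f K) <= fsum h N - fsum h K.
Proof.
  intros HK Hf. induction HK. replace (fsum f K - fsum f K) with 0 by ring. rewrite Rabs_R0; lra.
  simpl. replace (fsum f m + f m - fsum f K) with ((fsum f m - fsum f K) + f m) by ring.
  eapply Rle_trans. apply Rabs_triang. specialize (Hf m). lra.
Qed.

Lemma fsum_lim (g : nat -> nat -> R) K : (forall i, is_lim_seq (fun N => g N i) 0) ->
  is_lim_seq (fun N => fsum (g N) K) 0.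
Proof.
  intros H. induction K; simpl. apply is_lim_seq_const.
  replace (Finite 0) with (Finite (0 + 0)) by (f_equal; ring).
  apply is_lim_seq_plus'; auto.
Qed.

Lemma fsum_scal c f N : fsum (fun i => c * f i) N = c * fsum f N.
Proof. induction N; simpl. ring. rewrite IHN; ring. Qed.

Lemma fsum_minus f g N : fsum (fun i => f i - g i) N = fsum f N - fsum g N.
Proof. induction N; simpl. ring. rewrite IHN; ring. Qed.

Lemma fsum_pos f N : (forall i, 0 < f i) -> fsum f N <= fsum f (S N).
Proof. intros H; simpl; specialize (H N); lra. Qed.

Theorem mainTheorem13
  (X : seq_space) (HX : valid_space X)
  (a : nat -> R)
  (Ha_pos : forall n, 0 < a n)
  (Ha_dec : forall n, a (S n) < a n)
  (Ha_lim : is_lim_seq a 0)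
  (b : nat -> R) (Hb_X : in_space X b) (Hb_pos : forall n, 0 < b n)
  (pi : nat -> R) (Hpi : forall n, is_pi a n (pi n))
  (Hpi_bdd : exists M, forall n, Rabs (pi n) <= M)
  (Hphi : exists C mu, 0 < C /\ 0 < mu < 1 /\
     forall i j, (b i / b j) / (1 + a i / a j) <= C * mu ^ (natdist i j)) :
  forall j : nat, is_series (fun i => a i * pi i / (a i + a j)) 1.
Proof.
  intros j. destruct Hpi_bdd as [M HM].
  assert (HM0 : 0 <= M) by (eapply Rle_trans; [apply Rabs_pos | apply (HM 0%nat)]).
  assert (Hfac : forall i m, 1 <= Rabs (if Nat.eqb m i then 1 else (1 + a m / a i) / (1 - a m / a i))).
  { intros i m. destruct (Nat.eqb m i) eqn:E. rewrite Rabs_R1; lra.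
    apply Nat.eqb_neq in E. destruct (proj1 (Nat.lt_gt_cases m i) E) as [H|H].
    - pose proof (a_lt a Ha_dec m i H). pose proof (Ha_pos i).
      pose proof (fac_neg (a m / a i) (div_gt1 _ _ H1 H0)).
      rewrite <- Rabs_Ropp. eapply Rle_trans. 2: apply Rle_abs. lra.
    - pose proof (a_lt a Ha_dec i m H). pose proof (Ha_pos m).
      pose proof (fac_low (a m / a i) (div_lt1 _ _ H1 H0)).
      eapply Rle_trans. 2: apply Rle_abs. destruct (div_lt1 _ _ H1 H0). lra. }
  assert (Habs : forall i N, Rabs (2 * pprod a i N) <= M).
  { intros i N. eapply Rle_trans. 2: apply (HM i).
    apply (mono_abs_lim (fun N => 2 * pprod a i N)). 2: apply Hpi.
    intros n. simpl. rewrite !Rabs_mult. specialize (Hfac i n).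
    pose proof (Rabs_pos 2). pose proof (Rabs_pos (pprod a i n)).
    set (f := Rabs (if Nat.eqb n i then 1 else _)) in *.
    set (p := Rabs (pprod a i n)) in *. set (q := Rabs 2) in *.
    rewrite <- Rmult_assoc. rewrite <- (Rmult_1_r (q * p)) at 1.
    apply Rmult_le_compat_l; [apply Rmult_le_pos|]; lra. }
  assert (Hlow : forall N, 1 + 2 * ((fsum a (S N) - a 0%nat) / a 0%nat) <= pprod a 0 (S N)).
  { induction N.
    - simpl. replace (0 + a 0%nat - a 0%nat) with 0 by ring. unfold Rdiv. lra.
    - change (pprod a 0 (S (S N))) with (pprod a 0 (S N) *
         (if Nat.eqb (S N) 0 then 1 else (1 + a (S N) / a 0%nat) / (1 - a (S N) / a 0%nat))).
      simpl Nat.eqb. cbv iota.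
      pose proof (a_lt a Ha_dec 0 (S N) ltac:(lia)). pose proof (Ha_pos (S N)).
      pose proof (div_lt1 _ _ H0 H). pose proof (fac_low _ H1).
      assert (Hs : a 0%nat <= fsum a (S N)).
      { clear -Ha_pos. induction N. simpl. lra. simpl in *. pose proof (Ha_pos (S N)). lra. }
      assert (Hy : 0 <= (fsum a (S N) - a 0%nat) / a 0%nat) by (apply Rdiv_le_0_compat; [lra | apply Ha_pos]).
      replace ((fsum a (S (S N)) - a 0%nat) / a 0%nat) with
        ((fsum a (S N) - a 0%nat) / a 0%nat + a (S N) / a 0%nat)
        by (simpl; field; pose proof (Ha_pos 0%nat); lra).
      set (y := (fsum a (S N) - a 0%nat) / a 0%nat) in *.
      set (x := a (S N) / a 0%nat) in *.
      set (P := pprod a 0 (S N)) in *.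
      set (f := (1 + x) / (1 - x)) in *. nra. }
  assert (Hbnd : forall N, fsum a N <= a 0%nat + a 0%nat * M).
  { intros N. assert (fsum a N <= fsum a (S N)) by (apply fsum_pos; auto).
    specialize (Hlow N). specialize (Habs 0%nat (S N)).
    pose proof (Rle_abs (2 * pprod a 0 (S N))).
    pose proof (Ha_pos 0%nat).
    replace (fsum a (S N)) with (a 0%nat + a 0%nat * ((fsum a (S N) - a 0%nat) / a 0%nat)) in H
      by (field; lra).
    set (y := (fsum a (S N) - a 0%nat) / a 0%nat) in *. nra. }
  assert (Hcau : ex_lim_seq_cauchy (fsum a)).
  { apply ex_lim_seq_cauchy_corr. apply (ex_finite_lim_seq_incr _ (a 0%nat + a 0%nat * M)).
    intros; apply fsum_pos; auto. auto. }
  set (t := fun i => a i * pi i / (a i + a j)).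
  assert (Hsum : forall n, sum_n t n = fsum t (S n)).
  { induction n. rewrite sum_O. simpl. ring. rewrite sum_Sn, IHn. reflexivity. }
  assert (Hlim : is_lim_seq (fsum t) 1).
  2:{ assert (is_lim_seq (sum_n t) 1).
      { apply (is_lim_seq_ext (fun n => fsum t (S n))). intros; symmetry; auto.
        apply (proj1 (is_lim_seq_incr_1 _ _)). exact Hlim. }
      exact H. }
  set (d := fun N i => a i * (pi i - 2 * pprod a i N) / (a i + a j)).
  set (c := 2 * M / a j).
  pose proof (Ha_pos j) as Haj.
  assert (Hc : 0 <= c) by (unfold c; apply Rdiv_le_0_compat; lra).
  assert (Hd : forall N i, Rabs (d N i) <= c * a i).
  { intros N i. unfold d, c. pose proof (Ha_pos i).
    replace (a i * (pi i - 2 * pprod a i N) / (a i + a j)) with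
      ((a i / (a i + a j)) * (pi i - 2 * pprod a i N)) by (field; lra).
    replace (2 * M / a j * a i) with ((a i / a j) * (M + M)) by (field; lra).
    rewrite Rabs_mult. rewrite (Rabs_pos_eq (a i / (a i + a j))) by (apply Rdiv_le_0_compat; lra).
    apply Rmult_le_compat. apply Rdiv_le_0_compat; lra. apply Rabs_pos.
    unfold Rdiv. apply Rmult_le_compat_l. lra. apply Rinv_le_contravar; lra.
    eapply Rle_trans. apply Rabs_triang. rewrite Rabs_Ropp. specialize (HM i). specialize (Habs i N). lra. }
  assert (Hdlim : forall K, is_lim_seq (fun N => fsum (d N) K) 0).
  { intros K. apply fsum_lim. intros i. unfold d.
    apply (is_lim_seq_ext (fun N => (a i / (a i + a j)) * (pi i - 2 * pprod a i N))).
    { intros; field. pose proof (Ha_pos i); lra. }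
    replace (Finite 0) with (Rbar_mult (a i / (a i + a j)) (pi i - pi i)).
    2:{ simpl. f_equal. ring. }
    apply is_lim_seq_scal_l. apply is_lim_seq_minus'. apply is_lim_seq_const. apply Hpi. }
  apply is_lim_seq_spec. intros eps.
  assert (He2 : 0 < eps / 2 / (c + 1)) by (apply Rdiv_lt_0_compat; [destruct eps; simpl; lra | lra]).
  destruct (Hcau (mkposreal _ He2)) as [K0 HK0]. simpl in HK0.
  assert (He3 : 0 < eps / 2) by (destruct eps; simpl; lra).
  destruct (proj2 (is_lim_seq_spec _ _) (Hdlim K0) (mkposreal _ He3)) as [N1 HN1]. simpl in HN1.
  exists (Nat.max (Nat.max K0 N1) (S j)). intros n Hn.
  assert (Hid : fsum (fun i => a i * (2 * pprod a i n) / (a i + a j)) n = 1).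
  { rewrite ident; auto. rewrite Qp_zero; auto. ring. lia.
    intros m _. pose proof (Ha_pos m). lra. }
  replace (fsum t n - 1) with (fsum (d n) n).
  2:{ rewrite <- Hid, <- fsum_minus. apply fsum_ext_lt. intros i _. unfold t, d. field.
      pose proof (Ha_pos i); lra. }
  replace (fsum (d n) n) with (fsum (d n) K0 + (fsum (d n) n - fsum (d n) K0)) by ring.
  eapply Rle_lt_trans. apply Rabs_triang.
  specialize (HN1 n ltac:(lia)). rewrite Rminus_0_r in HN1.
  pose proof (fsum_tail (d n) (fun i => c * a i) K0 n ltac:(lia) (Hd n)).
  rewrite !fsum_scal in H.
  specialize (HK0 n K0 ltac:(lia) ltac:(lia)).
  pose proof (Rle_abs (fsum a n - fsum a K0)).
  assert (c * (fsum a n - fsum a K0) <= c * (eps / 2 / (c + 1))) by (apply Rmult_le_compat_l; lra).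
  assert (c * (eps / 2 / (c + 1)) < eps / 2).
  { replace (c * (eps / 2 / (c + 1))) with ((eps / 2) * (c / (c + 1))) by (field; lra).
    assert (c / (c + 1) < 1) by (apply (Rmult_lt_reg_r (c+1)); [lra|]; unfold Rdiv; rewrite Rmult_assoc, Rinv_l by lra; lra).
    nra. }
  lra.
Qed.
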